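(* Let $X$ be a finite set of distinct points in $\mathbb{R}^2$ such that no three points of $X$ are collinear. Fix distinct points $s, t \in X$. Then there exists a noncrossing Hamiltonian path through $X$ with endpoints $s$ and $t$.
   Context: Edges are straight line segments between points: for an edge $e=\{a,b\}$, $L(e)$ is the closed segment from $a$ to $b$. A path (set of edges) is noncrossing if no two of its edges have intersecting line segments (other than at a shared endpoint). *)

(* Defs.v *)
From HB Require Import structures.
From mathcomp Require Import all_boot all_order all_algebra.
Set Implicit Arguments. Unset Strict Implicit. Unset Printing Implicit Defensive.
Import Order.TTheory GRing.Theory Num.Theory.
Local Open Scope ring_scope.

Section Geom.
Variable R : realFieldType.
Notation pt := (R * R)%type.

(* a, b, c are collinear (signed area of the triangle is zero). *)
Definition collinear (a b c : pt) : Prop :=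
  (b.1 - a.1) * (c.2 - a.2) - (b.2 - a.2) * (c.1 - a.1) = 0.

Definition no_three_collinear (X : seq pt) : Prop :=
  forall a b c, a \in X -> b \in X -> c \in X ->
    a != b -> b != c -> a != c -> ~ collinear a b c.

Definition on_seg (a b x : pt) : Prop :=
  exists l : R, 0 <= l <= 1 /\
    x = ((1 - l) * a.1 + l * b.1, (1 - l) * a.2 + l * b.2).

Definition noncrossing_path (p : seq pt) : Prop :=
  forall (d : pt) (i j : nat), (i < j)%N -> (j.+1 < size p)%N ->
    forall x, on_seg (nth d p i) (nth d p i.+1) x ->
              on_seg (nth d p j) (nth d p j.+1) x ->
      (x = nth d p i \/ x = nth d p i.+1) /\ (x = nth d p j \/ x = nth d p j.+1).
End Geom.

(* Main.v *)
Require Import Defs.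
From HB Require Import structures.
From mathcomp Require Import all_boot all_order all_algebra.
From mathcomp Require Import reals.
From mathcomp Require Import ring lra.
Import Order.TTheory GRing.Theory Num.Theory.
Local Open Scope ring_scope.
Set Implicit Arguments. Unset Strict Implicit. Unset Printing Implicit Defensive.

Section Aux.
Variable R : realFieldType.
Notation pt := (R * R)%type.

Definition cr (a b c : pt) : R :=
  (b.1 - a.1) * (c.2 - a.2) - (b.2 - a.2) * (c.1 - a.1).
Definition lin (a b : R) (o x : pt) : R := a * (x.1 - o.1) + b * (x.2 - o.2).

Definition good (e1 e2 : pt * pt) : Prop :=
  forall x, on_seg e1.1 e1.2 x -> on_seg e2.1 e2.2 x ->
   (x = e1.1 \/ x = e1.2) /\ (x = e2.1 \/ x = e2.2).

Fixpoint PW {T : eqType} (r : T -> T -> Prop) (s : seq T) : Prop :=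
  if s is x :: s' then (forall y, y \in s' -> r x y) /\ PW r s' else True.

Fixpoint edges (p : seq pt) : seq (pt * pt) :=
  if p is x :: p' then (if p' is y :: _ then (x, y) :: edges p' else [::]) else [::].

Definition affine (G : pt -> R) := forall (p q : pt) l,
  G ((1 - l) * p.1 + l * q.1, (1 - l) * p.2 + l * q.2) = (1 - l) * G p + l * G q.

Lemma affine_lin a b o : affine (lin a b o).
Proof. by move=> p q l; rewrite /lin /=; ring. Qed.

Lemma affine_cr s o w : affine (fun x => s * cr o w x).
Proof. by move=> p q l; rewrite /cr /=; ring. Qed.

Lemma seg0 (p q : pt) l : l = 0 -> ((1 - l) * p.1 + l * q.1, (1 - l) * p.2 + l * q.2) = p.
Proof. by move->; rewrite subr0 !mul1r !mul0r !addr0; case: p. Qed.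

Lemma seg1 (p q : pt) l : l = 1 -> ((1 - l) * p.1 + l * q.1, (1 - l) * p.2 + l * q.2) = q.
Proof. by move->; rewrite subrr !mul1r !mul0r !add0r; case: q. Qed.

Lemma conv0 (l A B : R) : 0 <= l -> l <= 1 -> A <= 0 -> B <= 0 ->
  (1 - l) * A + l * B = 0 -> (A < 0 -> l = 1) /\ (B < 0 -> l = 0).
Proof.
move=> l0 l1 hA hB e.
have h1 : (1 - l) * A <= 0 by nra.
have h2 : l * B <= 0 by nra.
have e1 : (1 - l) * A = 0 by lra.
have e2 : l * B = 0 by lra.
split=> h.
  move: e1 => /eqP; rewrite mulf_eq0 => /orP[/eqP|/eqP]; lra.
move: e2 => /eqP; rewrite mulf_eq0 => /orP[/eqP|/eqP]; lra.
Qed.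

Lemma endpt (p q : pt) l A B : 0 <= l -> l <= 1 -> A <= 0 -> B <= 0 -> (A < 0 \/ B < 0) ->
  (1 - l) * A + l * B = 0 ->
  let x := ((1 - l) * p.1 + l * q.1, (1 - l) * p.2 + l * q.2) in x = p \/ x = q.
Proof.
move=> l0 l1 hA hB hAB e /=; have [c1 c2] := conv0 l0 l1 hA hB e.
case: hAB => h; [right; apply: seg1; exact: c1 h | left; apply: seg0; exact: c2 h].
Qed.

Lemma sep G p q c d : affine G -> G p <= 0 -> G q <= 0 -> (G p < 0 \/ G q < 0) ->
  0 <= G c -> 0 <= G d -> (0 < G c \/ 0 < G d) -> good (p, q) (c, d).
Proof.
move=> aG hp hq hpq hc hd hcd x /= [l [/andP[l0 l1] ->]] [m [/andP[m0 m1] Ex]].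
have G1 := aG p q l; have G2 := aG c d m; rewrite Ex in G1.
have e1 : (1 - l) * G p + l * G q = 0.
  have : (1 - m) * G c + m * G d >= 0 by nra.
  have : (1 - l) * G p + l * G q <= 0 by nra.
  lra.
have e2 : (1 - m) * (- G c) + m * (- G d) = 0 by lra.
split; first exact: (endpt p q l0 l1 hp hq hpq e1).
rewrite Ex; apply: (endpt c d m0 m1 (A := - G c) (B := - G d)) => //; try lra.
Qed.

Lemma sep0 G p q c d : affine G -> G p = 0 -> G q = 0 -> 0 <= G c ->
  (G c = 0 -> c = q) -> 0 < G d -> good (p, q) (c, d).
Proof.
move=> aG hp hq hc hcq hd x /= [l [/andP[l0 l1] ->]] [m [/andP[m0 m1] Ex]].
have G1 := aG p q l; have G2 := aG c d m; rewrite Ex in G1.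
rewrite hp hq !mulr0 addr0 in G1.
have e2 : (1 - m) * (- G c) + m * (- G d) = 0 by lra.
have [_ c2] := conv0 m0 m1 (A := - G c) (B := - G d) ltac:(lra) ltac:(lra) e2.
have m0' := c2 ltac:(lra).
rewrite Ex (seg0 c d m0').
have Gc0 : G c = 0.
  by move: G1; rewrite G2 m0' subr0 mul1r mul0r addr0.
rewrite (hcq Gc0); tauto.
Qed.


Lemma PW_cat {T : eqType} (r : T -> T -> Prop) s1 s2 :
  PW r (s1 ++ s2) <-> [/\ PW r s1, PW r s2 & forall x y, x \in s1 -> y \in s2 -> r x y].
Proof.
elim: s1 => [|x s1 IH] /=; first by split=> [h|[_ h _]] //; split.
split.
  move=> [h1 /IH [h2 h3 h4]]; split=> //.
    by split=> // y ys; apply: h1; rewrite mem_cat ys.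
  move=> a b; rewrite inE => /orP[/eqP->|as1] bs2; last exact: h4.
  by apply: h1; rewrite mem_cat bs2 orbT.
move=> [[h1 h2] h3 h4]; split.
  move=> y; rewrite mem_cat => /orP[|] hy; first exact: h1.
  by apply: h4 => //; rewrite inE eqxx.
apply/IH; split=> // a b ha hb; apply: h4 => //; by rewrite inE ha orbT.
Qed.

Lemma PW_nth {T : eqType} (r : T -> T -> Prop) s d i j :
  PW r s -> (i < j)%N -> (j < size s)%N -> r (nth d s i) (nth d s j).
Proof.
elim: s i j => [|x s IH] i j //= [h1 h2].
case: j => [|j] //; case: i => [|i] ij js /=.
  by apply: h1; apply: mem_nth.
exact: IH.
Qed.

Lemma PW_sub {T : eqType} (r r' : T -> T -> Prop) s :
  (forall x y, x \in s -> y \in s -> r x y -> r' x y) -> PW r s -> PW r' s.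
Proof.
elim: s => [|x s IH] //= h [h1 h2]; split.
  by move=> y ys; apply: h; rewrite ?inE ?eqxx ?ys ?orbT //; apply: h1.
by apply: IH => // a b ha hb; apply: h; rewrite inE ?ha ?hb orbT.
Qed.

Lemma PW_and {T : eqType} (r r' : T -> T -> Prop) s :
  PW r s -> PW r' s -> PW (fun x y => r x y /\ r' x y) s.
Proof.
elim: s => [|x s IH] //= [h1 h2] [h3 h4]; split; last exact: IH.
by move=> y ys; split; [apply: h1|apply: h3].
Qed.

Lemma pairwise_PW {T : eqType} (r : rel T) s : pairwise r s -> PW (fun x y => r x y) s.
Proof.
elim: s => [|x s IH] //=; rewrite /= => /andP[/allP h1 h2]; split; last exact: IH.
by move=> y ys; apply: h1.
Qed.

Lemma size_edges p : size (edges p) = (size p).-1.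
Proof. by elim: p => [|x [|y p] IH] //=; rewrite IH. Qed.

Lemma nth_edges d p i : (i.+1 < size p)%N ->
  nth (d, d) (edges p) i = (nth d p i, nth d p i.+1).
Proof.
elim: p i => [|x [|y p] IH] i //=.
case: i => [|i] //= hi; exact: IH.
Qed.

Lemma noncross_of_PW p : PW good (edges p) -> noncrossing_path p.
Proof.
move=> H d i j ij jp.
have hj : (j < size (edges p))%N by rewrite size_edges -ltnS (ltn_predK jp).
have := PW_nth (d, d) H ij hj.
by rewrite !nth_edges // (ltn_trans _ jp).
Qed.

Lemma mem_edges x p u v : (u, v) \in edges (x :: p) -> u \in x :: p /\ v \in p.
Proof.
elim: p x => [|y p IH] x //=.
rewrite inE => /orP[/eqP [-> ->]|/IH [h1 h2]].
  by split; rewrite inE eqxx.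
by split; rewrite inE ?h1 ?h2 orbT.
Qed.

Lemma mem_edges_belast x p u v : (u, v) \in edges (x :: p) -> u \in belast x p.
Proof.
elim: p x => [|y p IH] x //=.
rewrite inE => /orP[/eqP [-> _]|/IH h1]; first by rewrite inE eqxx.
by rewrite inE h1 orbT.
Qed.

Lemma edges_cat x L1 y L2 :
  edges (x :: L1 ++ y :: L2) = edges (x :: L1) ++ (last x L1, y) :: edges (y :: L2).
Proof.
elim: L1 x => [|z L1 IH] x //.
rewrite cat_cons.
change (edges (x :: z :: L1 ++ y :: L2)) with ((x, z) :: edges (z :: L1 ++ y :: L2)).
change (edges (x :: z :: L1)) with ((x, z) :: edges (z :: L1)).
by rewrite IH.
Qed.


Lemma cr_swap s a b : cr s a b = - cr s b a.
Proof. by rewrite /cr; ring. Qed.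
Lemma cr_self s a : cr s a a = 0.
Proof. by rewrite /cr; ring. Qed.
Lemma cr_self2 s a : cr s a s = 0.
Proof. by rewrite /cr; ring. Qed.

Lemma fanF sg s L : PW (fun u v => 0 < sg * cr s u v) L -> PW good (edges L).
Proof.
elim: L => [|y1 L IH] //; case: L IH => [|y2 L] IH // [h1 h2].
change (edges (y1 :: y2 :: L)) with ((y1, y2) :: edges (y2 :: L)).
split; last exact: IH.
have h3 := h1 y2 (mem_head _ _).
case: h2 => h2 _.
move=> [u v] /mem_edges [hu hv].
apply: (sep (G := fun x => sg * cr s y2 x)); first exact: affine_cr.
- by rewrite cr_swap mulrN oppr_le0 ltW.
- by rewrite cr_self mulr0.
- by left; rewrite cr_swap mulrN oppr_lt0.
- move: hu; rewrite inE => /orP[/eqP->|hu]; first by rewrite cr_self mulr0.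
  exact: ltW (h2 _ hu).
- exact: ltW (h2 _ hv).
- by right; apply: h2.
Qed.

Lemma fanS sg s L : PW (fun u v => 0 < sg * cr s u v) L -> PW good (edges (s :: L)).
Proof.
case: L => [|y1 L] // H.
change (edges (s :: y1 :: L)) with ((s, y1) :: edges (y1 :: L)).
split; last exact: fanF H.
case: H => h1 _.
move=> [u v] /mem_edges [hu hv].
apply: (sep0 (G := fun x => sg * cr s y1 x)); first exact: affine_cr.
- by rewrite cr_self2 mulr0.
- by rewrite cr_self mulr0.
- move: hu; rewrite inE => /orP[/eqP->|hu]; first by rewrite cr_self mulr0.
  exact: ltW (h1 _ hu).
- move: hu; rewrite inE => /orP[/eqP->|hu] // h0.
  by have := h1 _ hu; rewrite h0 ltxx.
- exact: h1.
Qed.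


Lemma argmin {T : eqType} (f : T -> R) (L : seq T) : L != [::] ->
  exists2 y, y \in L & forall z, z \in L -> f y <= f z.
Proof.
elim: L => [|x L IH] // _.
case: L IH => [|x' L] IH.
  by exists x => [|z]; rewrite ?inE // => /eqP->.
have [y hy hm] := IH isT.
case: (leP (f x) (f y)) => h.
  exists x; first exact: mem_head.
  move=> z; rewrite inE => /orP[/eqP->//|/hm]; exact: le_trans.
exists y; first by rewrite inE hy orbT.
move=> z; rewrite inE => /orP[/eqP->|/hm //]; exact: ltW.
Qed.

Lemma cr_lin_id a b c d s y z :
  lin c d s y * lin a b s z - lin c d s z * lin a b s y = (c * b - d * a) * cr s y z.
Proof. by rewrite /lin /cr; ring. Qed.

Lemma pick_step X s a b c d y :
  no_three_collinear X -> s \in X -> y \in X -> y != s ->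
  (forall x, x \in X -> x != s -> 0 < lin a b s x) ->
  c * b - d * a != 0 ->
  (forall z, z \in X -> z != s -> lin c d s y / lin a b s y <= lin c d s z / lin a b s z) ->
  let ry := lin c d s y / lin a b s y in
  lin (c - ry * a) (d - ry * b) s y = 0 /\
  forall z, z \in X -> z != s -> z != y -> 0 < lin (c - ry * a) (d - ry * b) s z.
Proof.
move=> ntc sX yX ys Hw Hcd Hmin ry.
have E1 : forall x, lin (c - ry * a) (d - ry * b) s x = lin c d s x - ry * lin a b s x.
  by move=> x; rewrite /lin; ring.
have vy0 : lin a b s y != 0 by rewrite gt_eqF // Hw.
split; first by rewrite E1 /ry divfK // subrr.
move=> z zX zs zy.
have vz : 0 < lin a b s z by apply: Hw.
have vz0 : lin a b s z != 0 by rewrite gt_eqF.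
set rz := lin c d s z / lin a b s z.
have Ez : lin c d s z = rz * lin a b s z by rewrite /rz divfK.
have Ey : lin c d s y = ry * lin a b s y by rewrite /ry divfK.
have hle : ry <= rz by apply: Hmin.
have hne : ry != rz.
  apply/eqP => eqr.
  have : (c * b - d * a) * cr s y z = 0.
    by rewrite -cr_lin_id Ez Ey eqr; ring.
  move/eqP; rewrite mulf_eq0 (negbTE Hcd) /= => /eqP hc.
  by apply: (ntc s y z) => //; rewrite eq_sym.
rewrite E1 Ez -mulrBl; apply: mulr_gt0 => //.
by rewrite subr_gt0 lt_neqAle hne hle.
Qed.


Lemma lin_self a b s : lin a b s s = 0.
Proof. by rewrite /lin !subrr !mulr0 addr0. Qed.

Lemma lin_shift a b s y x : lin a b y x = lin a b s x - lin a b s y.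
Proof. by rewrite /lin; ring. Qed.

Lemma lin_E a b c d ry s x :
  lin (c - ry * a) (d - ry * b) s x = lin c d s x - ry * lin a b s x.
Proof. by rewrite /lin; ring. Qed.

Lemma extreme n : forall X s t, (size X <= n)%N -> uniq X -> no_three_collinear X ->
  s \in X -> t \in X -> s != t ->
  (exists a b, forall x, x \in X -> x != s -> 0 < lin a b s x) ->
  exists q, [/\ perm_eq (s :: q) X, last s q = t & PW good (edges (s :: q))].
Proof.
elim: n => [|n IH] X s t hn uX ntc sX tX st [a [b Hw]].
  by move: hn; rewrite leqn0 => /eqP/size0nil e; rewrite e in sX.
set Y := rem s X.
have pXY : perm_eq X (s :: Y) := perm_to_rem sX.
have memY : forall z, (z \in Y) = (z != s) && (z \in X).
  by move=> z; rewrite (mem_rem_uniq s uX) inE.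
have uY : uniq Y := rem_uniq s uX.
have sY : (size Y <= n)%N by rewrite size_rem //; move: hn; case: (size X).
have ntcY : no_three_collinear Y.
  move=> p q r; rewrite !memY => /andP[_ hp] /andP[_ hq] /andP[_ hr]; exact: ntc.
have ts : t != s by rewrite eq_sym.
have tY : t \in Y by rewrite memY ts.
case: (boolP (has (fun z => z != t) Y)) => [/hasP [z zY zt] | /hasPn hall]; last first.
  have hYt : perm_eq Y [:: t].
    apply: uniq_perm => // z; rewrite inE; apply/idP/idP => [zY|/eqP->//].
    by have := hall z zY; rewrite negbK.
  exists [:: t]; split=> //.
  by rewrite perm_sym (perm_trans pXY) // perm_cons.
have ab0 : b * b + a * a != 0.
  apply/eqP => e.
  have a0 : a = 0 by nra.
  have b0 : b = 0 by nra.
  by have := Hw t tX ts; rewrite /lin a0 b0 !mul0r addr0 ltxx.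
suff H : forall c d y, y \in Y -> y != t -> c * b - d * a != 0 ->
    (forall z, z \in Y -> lin c d s y / lin a b s y <= lin c d s z / lin a b s z) ->
    exists q, [/\ perm_eq (s :: q) X, last s q = t & PW good (edges (s :: q))].
  have Yn : Y != [::] by apply/eqP => eY; rewrite eY in tY.
  have [y1 y1Y m1] := argmin (fun x => lin (-b) a s x / lin a b s x) Yn.
  have [y2 y2Y m2] := argmin (fun x => lin b (-a) s x / lin a b s x) Yn.
  case: (eqVneq y1 t) => [e1|n1]; last first.
    apply: (H (-b) a y1) => //.
    have -> : - b * b - a * a = - (b * b + a * a) by ring.
    by rewrite oppr_eq0.
  case: (eqVneq y2 t) => [e2|n2]; last first.
    apply: (H b (-a) y2) => //.
    by have -> : b * b - - a * a = b * b + a * a by ring.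
  exfalso.
  have zX : z \in X by move: zY; rewrite memY => /andP[].
  have zs : z != s by move: zY; rewrite memY => /andP[].
  have hcd : - b * b - a * a != 0.
    have -> : - b * b - a * a = - (b * b + a * a) by ring.
    by rewrite oppr_eq0.
  have hm : forall z', z' \in X -> z' != s ->
      lin (-b) a s t / lin a b s t <= lin (-b) a s z' / lin a b s z'.
    by move=> z' hz hz'; rewrite -e1; apply: m1; rewrite memY hz' hz.
  have [_ G] := pick_step (c := -b) (d := a) ntc sX tX ts Hw hcd hm.
  have := G z zX zs zt.
  rewrite lin_E.
  have vz0 : lin a b s z != 0 by rewrite gt_eqF // Hw.
  have h1 := m1 z zY; have h2 := m2 z zY; rewrite e1 in h1; rewrite e2 in h2.
  have F : forall x, lin b (- a) s x / lin a b s x = - (lin (- b) a s x / lin a b s x).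
    by move=> x; rewrite -mulNr; congr (_ / _); rewrite /lin; ring.
  rewrite !F in h2.
  have eq : lin (- b) a s z / lin a b s z = lin (- b) a s t / lin a b s t by lra.
  rewrite -eq -{1}(divfK vz0 (lin (- b) a s z)) subrr ltxx //.
move=> c d y yY yt Hcd Hmin.
have yX : y \in X by move: yY; rewrite memY => /andP[].
have ys : y != s by move: yY; rewrite memY => /andP[].
have [Gy Gz] := pick_step ntc sX yX ys Hw Hcd
   (fun z hz hz' => Hmin z ltac:(by rewrite memY hz' hz)).
set ry := lin c d s y / lin a b s y in Gy Gz.
set c' := c - ry * a in Gy Gz; set d' := d - ry * b in Gy Gz.
have [q' [pq' lq' Pq']] : exists q', [/\ perm_eq (y :: q') Y, last y q' = t & PW good (edges (y :: q'))].
  apply: IH => //.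
  exists c', d' => x xY xy; rewrite (lin_shift _ _ s) Gy subr0.
  by move: xY; rewrite memY => /andP[xs xX]; apply: Gz.
have uq : uniq (y :: q') by rewrite (perm_uniq pq').
have inq : forall x, x \in q' -> [/\ x \in X, x != s & x != y].
  move=> x xq.
  have : x \in Y by rewrite -(perm_mem pq') inE xq orbT.
  rewrite memY => /andP[-> ->]; split=> //.
  by apply: contraTneq xq => ->; move: uq => /= /andP[].
exists (y :: q'); split=> //.
  by rewrite perm_sym (perm_trans pXY) // perm_cons perm_sym.
change (edges (s :: y :: q')) with ((s, y) :: edges (y :: q')).
split=> //.
move=> [u v] /mem_edges [hu hv].
have [vX vs vy] := inq v hv.
apply: (sep0 (G := lin c' d' s)); first exact: affine_lin.
- exact: lin_self.
- exact: Gy.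
- move: hu; rewrite inE => /orP[/eqP->|hu]; first by rewrite Gy.
  have [uX1 us uy] := inq u hu; exact: ltW (Gz u uX1 us uy).
- move: hu; rewrite inE => /orP[/eqP->//|hu] h0.
  have [uX1 us uy] := inq u hu; by have := Gz u uX1 us uy; rewrite h0 ltxx.
- exact: Gz.
Qed.


Lemma affine_cr1 o w : affine (cr o w).
Proof. by move=> p q l; rewrite /cr /=; ring. Qed.

Definition alp (s t x : pt) := (t.1 - s.1) * (x.1 - s.1) + (t.2 - s.2) * (x.2 - s.2).
Definition key (s t x : pt) := - alp s t x / cr s t x.
Definition E2 (s t : pt) := (t.1 - s.1) * (t.1 - s.1) + (t.2 - s.2) * (t.2 - s.2).

Lemma K1 s t u v : cr s t u != 0 -> cr s t v != 0 ->
  E2 s t * cr s u v = cr s t u * cr s t v * (key s t v - key s t u).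
Proof. rewrite /key /E2 /alp /cr => hu hv; field; by apply/andP; split.
Qed.

Lemma E2_gt0 (s t : pt) : s != t -> 0 < E2 s t.
Proof.
move=> st; rewrite /E2.
have : (t.1 - s.1 != 0) || (t.2 - s.2 != 0).
  apply: contraR st; rewrite negb_or !negbK !subr_eq0 => /andP[/eqP h1 /eqP h2].
  by apply/eqP; case: s t h1 h2 => [? ?] [? ?] /= -> ->.
case/orP => h.
  have h1 : 0 < (t.1 - s.1) * (t.1 - s.1) by rewrite -expr2 exprn_even_gt0.
  have h2 : 0 <= (t.2 - s.2) * (t.2 - s.2) by rewrite -expr2 sqr_ge0.
  exact: ltr_wpDr h2 h1.
have h1 : 0 < (t.2 - s.2) * (t.2 - s.2) by rewrite -expr2 exprn_even_gt0.
have h2 : 0 <= (t.1 - s.1) * (t.1 - s.1) by rewrite -expr2 sqr_ge0.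
exact: ltr_wpDl h2 h1.
Qed.

Lemma pos_of (E c P : R) : 0 < E -> E * c = P -> 0 < P -> 0 < c.
Proof. by move=> hE <-; rewrite pmulr_rgt0. Qed.
Lemma neg_of (E c P : R) : 0 < E -> E * c = P -> P < 0 -> c < 0.
Proof. by move=> hE <-; rewrite pmulr_rlt0. Qed.

Lemma sorted_strict (f : pt -> R) L : uniq L ->
  (forall x y, x \in L -> y \in L -> x != y -> f x != f y) ->
  sorted (fun x y => f x <= f y) L -> PW (fun x y => f x < f y) L.
Proof.
move=> uL inj so.
have h1 : PW (fun x y => f x <= f y) L.
  apply: pairwise_PW; rewrite -sorted_pairwise //.
  by move=> y x z /= h1 h2; apply: le_trans h2.
have h2 : PW (fun x y => x != y) L by apply: pairwise_PW; rewrite -uniq_pairwise.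
apply: PW_sub (PW_and h1 h2) => x y hx hy [a b].
by rewrite lt_neqAle a inj.
Qed.


Lemma cr_nz X s t x : no_three_collinear X -> s \in X -> t \in X -> x \in X ->
  s != t -> x != s -> x != t -> cr s t x != 0.
Proof.
move=> ntc sX tX xX st xs xt; apply/eqP => h.
by apply: (ntc s t x) => //; rewrite eq_sym.
Qed.

Lemma perm_help X s t L1 L2 : uniq X -> no_three_collinear X -> s \in X -> t \in X ->
  s != t ->
  perm_eq L1 [seq x <- X | 0 < cr s t x] -> perm_eq L2 [seq x <- X | cr s t x < 0] ->
  perm_eq (s :: L1 ++ rcons L2 t) X.
Proof.
move=> uX ntc sX tX st p1 p2.
set P0 := [seq x <- X | 0 < cr s t x]; set N0 := [seq x <- X | cr s t x < 0].
apply: (perm_trans (y := s :: P0 ++ rcons N0 t)).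
  by rewrite perm_cons; apply: perm_cat p1 _; rewrite -!cats1 perm_cat2r.
apply: uniq_perm => //.
  rewrite /= mem_cat mem_rcons inE !mem_filter cr_self2 ltxx (negbTE st) /=.
  rewrite cat_uniq rcons_uniq !filter_uniq // mem_filter cr_self ltxx /= andbT.
  apply/hasPn => x; rewrite mem_rcons inE mem_filter => /orP[/eqP->|/andP[h _]].
    by rewrite mem_filter cr_self ltxx.
  by rewrite mem_filter negb_and; apply/orP; left; rewrite -leNgt ltW.
move=> x; rewrite inE mem_cat mem_rcons inE !mem_filter.
apply/idP/idP.
  case/orP=> [/eqP->//|/orP[/andP[_ ->]//|/orP[/eqP->//|/andP[_ ->]//]]].
move=> xX; case: (eqVneq x s) => //= xs; case: (eqVneq x t) => [_|xt]; first by rewrite !orbT.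
have := cr_nz ntc sX tX xX st xs xt.
rewrite xX !andbT; case: ltgtP => //=; by rewrite ?orbT.
Qed.

End Aux.
Arguments good {R}.
Unset Implicit Arguments.

Theorem lemma2 (R : realType) (X : seq (R * R)) (s t : R * R) :
  uniq X -> no_three_collinear X -> s \in X -> t \in X -> s != t ->
  exists p : seq (R * R),
    [/\ perm_eq p X, head t p = s, last s p = t & noncrossing_path p].
Proof.
move=> uX ntc sX tX st.
suff [q [pq lq Pq]] : exists q, [/\ perm_eq (s :: q) X, last s q = t & PW good (edges (s :: q))].
  by exists (s :: q); split => //; apply: noncross_of_PW.
set P0 := [seq x <- X | 0 < cr s t x]; set N0 := [seq x <- X | cr s t x < 0].
set k := key s t.
have E2p := E2_gt0 st.
have memP : forall x, x \in P0 -> [/\ x \in X, x != s, x != t & 0 < cr s t x].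
  move=> x; rewrite mem_filter => /andP[h xX]; split=> //.
    by apply: contraTneq h => ->; rewrite cr_self2 ltxx.
  by apply: contraTneq h => ->; rewrite cr_self ltxx.
have memN : forall x, x \in N0 -> [/\ x \in X, x != s, x != t & cr s t x < 0].
  move=> x; rewrite mem_filter => /andP[h xX]; split=> //.
    by apply: contraTneq h => ->; rewrite cr_self2 ltxx.
  by apply: contraTneq h => ->; rewrite cr_self ltxx.
have crnz : forall x, x \in X -> x != s -> x != t -> cr s t x != 0.
  by move=> x xX xs xt; apply: (cr_nz ntc).
have Kx : forall x y, x \in X -> y \in X -> x != s -> x != t -> y != s -> y != t ->
    E2 s t * cr s x y = cr s t x * cr s t y * (k y - k x).
  by move=> x y xX yX xs xt ys yt; apply: K1; apply: crnz.
have kinj : forall x y, x \in X -> y \in X -> x != s -> x != t -> y != s -> y != t ->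
    x != y -> k x != k y.
  move=> x y xX yX xs xt ys yt xy; apply/eqP => e.
  have := Kx x y xX yX xs xt ys yt; rewrite e subrr mulr0 => /eqP.
  rewrite mulf_eq0 gt_eqF //= => /eqP h.
  by apply: (ntc s x y) => //; rewrite eq_sym.
have tot : total (fun x y : R * R => k x <= k y) by move=> x y; exact: le_total.
have tot' : total (fun x y : R * R => - k x <= - k y) by move=> x y; exact: le_total.
have [A [pA uA PA KA]] : exists A, [/\ perm_eq A P0, uniq A,
    PW (fun u v => 0 < 1 * cr s u v) A & PW (fun u v => k u < k v) A].
  set A := sort (fun x y => k x <= k y) P0.
  have pA : perm_eq A P0 by rewrite perm_sort.
  have uA : uniq A by rewrite sort_uniq filter_uniq.
  have mA : forall x, x \in A -> [/\ x \in X, x != s, x != t & 0 < cr s t x].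
    by move=> x; rewrite mem_sort; apply: memP.
  have KA : PW (fun u v => k u < k v) A.
    apply: sorted_strict => //; last exact: sort_sorted.
    move=> x y /mA[? ? ? _] /mA[? ? ? _]; exact: kinj.
  exists A; split=> //.
  apply: PW_sub KA => u v /mA[? ? ? hu] /mA[? ? ? hv] huv; rewrite mul1r.
  apply: (pos_of E2p (Kx u v _ _ _ _ _ _)) => //.
  by rewrite !mulr_gt0 // subr_gt0.
have [Ad [pAd PAd]] : exists Ad, perm_eq Ad P0 /\
    PW (fun u v => 0 < -1 * cr s u v) (rcons Ad t).
  set Ad := sort (fun x y => - k x <= - k y) P0.
  have pAd0 : perm_eq Ad P0 by rewrite perm_sort.
  have uAd0 : uniq Ad by rewrite sort_uniq filter_uniq.
  have mAd : forall x, x \in Ad -> [/\ x \in X, x != s, x != t & 0 < cr s t x].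
    by move=> x; rewrite mem_sort; apply: memP.
  have KAd : PW (fun u v => - k u < - k v) Ad.
    apply: sorted_strict => //; last exact: sort_sorted.
    move=> x y /mAd[? ? ? _] /mAd[? ? ? _] xy; rewrite eqr_opp; exact: kinj.
  exists Ad; split=> //.
  rewrite -cats1; apply/PW_cat; split=> //.
    apply: PW_sub KAd => u v /mAd[? ? ? hu] /mAd[? ? ? hv] huv; rewrite mulN1r oppr_gt0.
    apply: (neg_of E2p (Kx u v _ _ _ _ _ _)) => //.
    by rewrite pmulr_rlt0 ?mulr_gt0 // subr_lt0 -ltrN2.
  move=> x y /mAd[_ _ _ hx]; rewrite inE => /eqP->.
  by rewrite mulN1r cr_swap opprK.
have [B [pB uB PB KB]] : exists B, [/\ perm_eq B N0, uniq B,
    PW (fun u v => 0 < 1 * cr s u v) (rcons B t) & PW (fun u v => k u < k v) B].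
  set B := sort (fun x y => k x <= k y) N0.
  have pB : perm_eq B N0 by rewrite perm_sort.
  have uB : uniq B by rewrite sort_uniq filter_uniq.
  have mB : forall x, x \in B -> [/\ x \in X, x != s, x != t & cr s t x < 0].
    by move=> x; rewrite mem_sort; apply: memN.
  have KB : PW (fun u v => k u < k v) B.
    apply: sorted_strict => //; last exact: sort_sorted.
    move=> x y /mB[? ? ? _] /mB[? ? ? _]; exact: kinj.
  exists B; split=> //.
  rewrite -cats1; apply/PW_cat; split=> //.
    apply: PW_sub KB => u v /mB[? ? ? hu] /mB[? ? ? hv] huv; rewrite mul1r.
    apply: (pos_of E2p (Kx u v _ _ _ _ _ _)) => //.
    by rewrite mulr_gt0 ?nmulr_rgt0 // subr_gt0.
  move=> x y /mB[_ _ _ hx]; rewrite inE => /eqP->.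
  by rewrite mul1r cr_swap oppr_gt0.
have mA : forall x, x \in A -> [/\ x \in X, x != s, x != t & 0 < cr s t x].
  by move=> x; rewrite (perm_mem pA); apply: memP.
have mB : forall x, x \in B -> [/\ x \in X, x != s, x != t & cr s t x < 0].
  by move=> x; rewrite (perm_mem pB); apply: memN.
case: (eqVneq P0 [::]) => [P0n | P0ne].
  exists (rcons B t); split.
  - by apply: (perm_help (L1 := [::])) => //; rewrite -/P0 P0n.
  - by rewrite last_rcons.
  - exact: fanS PB.
case: (eqVneq N0 [::]) => [N0n | N0ne].
  exists (rcons Ad t); split.
  - by rewrite -cats1; apply: (perm_help (L2 := [::])) => //; rewrite -/N0 N0n.
  - by rewrite last_rcons.
  - exact: fanS PAd.
have Ane : A != [::] by rewrite -size_eq0 (perm_size pA) size_eq0.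
have Bne : B != [::] by rewrite -size_eq0 (perm_size pB) size_eq0.
move: Ane pA uA PA KA mA; case/lastP: A => [//|A' a] _ pA uA PA KA mA.
move: Bne pB uB PB KB mB; case: B => [//|b1 B'] _ pB uB PB KB mB.
have [aX a_s a_t ba] := mA a ltac:(by rewrite mem_rcons mem_head).
have [b1X b1s b1t bb1] := mB b1 (mem_head _ _).
have PA' : forall u, u \in A' -> 0 < cr s u a.
  move: PA; rewrite -cats1 => /PW_cat [_ _ h] u hu.
  by have := h u a hu (mem_head _ _); rewrite mul1r.
have KA' : forall u, u \in A' -> k u < k a.
  move: KA; rewrite -cats1 => /PW_cat [_ _ h] u hu.
  exact: h u a hu (mem_head _ _).
have PB' : forall v, v \in rcons B' t -> 0 < cr s b1 v.
  by move: PB => /= [h _] v hv; have := h v hv; rewrite mul1r.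
have KB' : forall v, v \in B' -> k b1 < k v.
  by move: KB => /= [h _].
have mA' : forall u, u \in A' -> [/\ u \in X, u != s, u != t & 0 < cr s t u].
  by move=> u hu; apply: mA; rewrite mem_rcons inE hu orbT.
have mB' : forall u, u \in B' -> [/\ u \in X, u != s, u != t & cr s t u < 0].
  by move=> u hu; apply: mB; rewrite inE hu orbT.
case: (ltP 0 (cr s a b1)) => hab.
  have GA : forall u, u \in rcons A' a -> 0 < cr s t u by move=> u /mA[].
  have GB : forall u, u \in b1 :: B' -> cr s t u < 0 by move=> u /mB[].
  exists (rcons A' a ++ b1 :: rcons B' t); split.
  - exact: (perm_help (L1 := rcons A' a) (L2 := b1 :: B')).
  - by rewrite last_cat /= last_rcons.
  rewrite edges_cat last_rcons; apply/PW_cat; split.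
  - exact: fanS PA.
  - split; last exact: fanF PB.
    move=> [u v] he; have hu := mem_edges_belast he; rewrite belast_rcons in hu.
    have [_ hv] := mem_edges he.
    apply: (sep (G := cr s b1)); first exact: affine_cr1.
    + by rewrite cr_swap oppr_le0 ltW.
    + by rewrite cr_self.
    + by left; rewrite cr_swap oppr_lt0.
    + move: hu; rewrite inE => /orP[/eqP->|hu]; first by rewrite cr_self.
      by apply: ltW; apply: PB'; rewrite mem_rcons inE hu orbT.
    + exact: ltW (PB' v hv).
    + by right; apply: PB'.
  move=> e1 e2 he1; rewrite inE => /orP[/eqP ->|he2].
    move: he1; rewrite -cats1 edges_cat mem_cat inE => /orP[he1|/eqP ->].
      case: e1 he1 => u v he1; have [hu hv] := mem_edges he1.
      apply: (sep (G := cr s a)); first exact: affine_cr1.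
      * move: hu; rewrite inE => /orP[/eqP->|hu]; first by rewrite cr_self2.
        by rewrite cr_swap oppr_le0 ltW // PA'.
      * by rewrite cr_swap oppr_le0 ltW // PA'.
      * by right; rewrite cr_swap oppr_lt0 PA'.
      * by rewrite cr_self.
      * exact: ltW.
      * by right.
    have := mem_last s A'; rewrite inE => /orP[/eqP ->|hw].
      apply: (sep0 (G := cr s a)); first exact: affine_cr1.
      * exact: cr_self2.
      * exact: cr_self.
      * by rewrite cr_self.
      * by [].
      * exact: hab.
    apply: (sep (G := cr s a)); first exact: affine_cr1.
    * by rewrite cr_swap oppr_le0 ltW // PA'.
    * by rewrite cr_self.
    * by left; rewrite cr_swap oppr_lt0 PA'.
    * by rewrite cr_self.
    * exact: ltW.
    * by right.
  case: e1 he1 => u v he1; have [hu hv] := mem_edges he1.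
  case: e2 he2 => u' v' he2; have [_ hv'] := mem_edges he2.
  have hu' := mem_edges_belast he2; rewrite belast_rcons in hu'.
  apply: (sep (G := fun x => -1 * cr s t x)); first exact: affine_cr.
  - move: hu; rewrite inE => /orP[/eqP->|hu]; first by rewrite cr_self2 mulr0.
    by rewrite mulN1r oppr_le0 ltW // GA.
  - by rewrite mulN1r oppr_le0 ltW // GA.
  - by right; rewrite mulN1r oppr_lt0 GA.
  - by rewrite mulN1r oppr_ge0 ltW // GB.
  - move: hv'; rewrite mem_rcons inE => /orP[/eqP->|hv']; first by rewrite cr_self mulr0.
    by rewrite mulN1r oppr_ge0 ltW // GB // inE hv' orbT.
  - by left; rewrite mulN1r oppr_gt0 GB.
have hab' : cr s a b1 < 0.
  rewrite lt_neqAle hab andbT; apply/eqP => h.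
  apply: (ntc s a b1) => //; try by rewrite eq_sym.
  by apply: contraTneq ba => ->; rewrite -leNgt ltW.
have kab : k a < k b1.
  have := Kx a b1 aX b1X a_s a_t b1s b1t => e.
  have : E2 s t * cr s a b1 < 0 by rewrite pmulr_rlt0.
  by rewrite e nmulr_rlt0 ?subr_gt0 // pmulr_rlt0.
have W : exists a0 b0, forall x, x \in X -> x != s -> 0 < lin a0 b0 s x.
  exists (a.2 - b1.2), (b1.1 - a.1) => x xX xs.
  have -> : lin (a.2 - b1.2) (b1.1 - a.1) s x = cr s b1 x + cr s x a.
    by rewrite /lin /cr; ring.
  case: (eqVneq x t) => [->|xt].
    by rewrite (cr_swap s b1 t); apply: addr_gt0 => //; rewrite oppr_gt0.
  move: (crnz x xX xs xt); rewrite neq_lt => /orP[hx|hx].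
    have xN : x \in b1 :: B' by rewrite (perm_mem pB) mem_filter hx xX.
    have h1 : 0 <= cr s b1 x.
      move: xN; rewrite inE => /orP[/eqP->|xB]; first by rewrite cr_self.
      by apply: ltW; apply: PB'; rewrite mem_rcons inE xB orbT.
    have kx : k b1 <= k x.
      move: xN; rewrite inE => /orP[/eqP->//|xB]; exact: ltW (KB' x xB).
    have [_ _ xt' _] := mB x xN.
    have h2 : 0 < cr s x a.
      apply: (pos_of E2p (Kx x a xX aX xs xt a_s a_t)).
      by rewrite nmulr_rgt0 ?nmulr_rlt0 // subr_lt0 (lt_le_trans kab kx).
    exact: ltr_wpDl h1 h2.
  have xP : x \in rcons A' a by rewrite (perm_mem pA) mem_filter hx xX.
  have h2 : 0 <= cr s x a.
    move: xP; rewrite mem_rcons inE => /orP[/eqP->|xA]; first by rewrite cr_self.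
    exact: ltW (PA' x xA).
  have kx : k x <= k a.
    move: xP; rewrite mem_rcons inE => /orP[/eqP->//|xA]; exact: ltW (KA' x xA).
  have h1 : 0 < cr s b1 x.
    apply: (pos_of E2p (Kx b1 x b1X xX b1s b1t xs xt)).
    by rewrite nmulr_rgt0 ?nmulr_rlt0 // subr_lt0 (le_lt_trans kx kab).
  exact: ltr_wpDr h2 h1.
exact: (extreme (n := size X) (leqnn _) uX ntc sX tX st W).
Qed.
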